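(* Let $G$ be a group, $c\in G$, and $k_1,\dots,k_n$ integers with $k=\gcd(k_1,\dots,k_n)$. If the set $\{(x_1,\dots,x_n)\in G^n:x_1^{k_1}\cdots x_n^{k_n}=c\}$ is $2$-large in $G^n$, then $z^k=1$ for all $z\in Z(G)$.
   Context: A subset $X$ of a group $K$ is $2$-large in $K$ if $aX\cap bX\ne\emptyset$ for all $a,b\in K$. *)

(* Defs.v *)
From mathcomp Require Import all_boot all_algebra.
Set Implicit Arguments. Unset Strict Implicit. Unset Printing Implicit Defensive.

Local Open Scope group_scope.

(* Integer power x^m in a group: x^n for m = n >= 0, (x^(n+1))^-1 for m = -(n+1). *)
Definition zexpg (G : groupType) (x : G) (m : int) : G :=
  match m with
  | Posz n => x ^+ n
  | Negz n => (x ^+ n.+1)^-1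
  end.

(* The direct power G^n, elements as functions 'I_n -> G, with the
   componentwise product. *)
Definition tmul (G : groupType) (n : nat) (a x : 'I_n -> G) : 'I_n -> G :=
  fun i => a i * x i.

(* X is 2-large in G^n: aX meets bX for all a, b in G^n, i.e. there are
   x, y in X with a x = b y. *)
Definition two_large (G : groupType) (n : nat) (X : ('I_n -> G) -> Prop) : Prop :=
  forall a b : 'I_n -> G, exists x y, X x /\ X y /\ tmul a x = tmul b y.

Definition in_center (G : groupType) (z : G) : Prop := forall g : G, z * g = g * z.

Definition word_val (G : groupType) (n : nat) (k : 'I_n -> int) (x : 'I_n -> G) : G :=
  \big[*%g/1]_(i < n) zexpg (x i) (k i).

(* gcd(k_1, ..., k_n) (nonnegative; 0 for n = 0 or all k_i = 0). *)
Definition gcd_list (n : nat) (k : 'I_n -> int) : int := \big[gcdz/0%R]_(i < n) k i.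

(* Main.v *)
Require Import Defs.
From mathcomp Require Import all_boot all_algebra.

Local Open Scope group_scope.

Lemma zexpg_eq1 (G : groupType) (z : G) (m : int) :
  (zexpg z m = 1) <-> (z ^+ `|m|%N = 1).
Proof.
case: m => [n|n] /=; first by [].
split=> H; [apply/eqP; rewrite -invg_eq1; exact/eqP | by rewrite H invg1].
Qed.

Lemma center_expg (G : groupType) (z : G) n : in_center z -> in_center (z ^+ n).
Proof.
move=> Hz g; elim: n => [|n IH]; first by rewrite expg0 mul1g mulg1.
by rewrite expgS -mulgA IH !mulgA Hz.
Qed.

Lemma center_inv (G : groupType) (z : G) : in_center z -> in_center z^-1.
Proof.
move=> Hz g; apply: (mulgI z); rewrite mulgA mulgV mul1g mulgA Hz -mulgA mulgV mulg1 //.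
Qed.

Lemma center_zexpg (G : groupType) (z : G) m : in_center z -> in_center (zexpg z m).
Proof.
move=> Hz; case: m => [n|n] /=; first exact: center_expg.
exact/center_inv/center_expg.
Qed.

Lemma zexpgM (G : groupType) (z g : G) m : in_center z ->
  zexpg (z * g) m = zexpg z m * zexpg g m.
Proof.
move=> Hz; case: m => [n|n] /=; first by rewrite expgMn //; apply: Hz.
rewrite expgMn; last by apply: Hz.
rewrite invgM; symmetry; apply: center_inv; exact: center_expg.
Qed.

Lemma prod_split (G : groupType) (I : Type) (r : seq I) (w g : I -> G) :
  (forall i, in_center (w i)) ->
  \big[*%g/1]_(i <- r) (w i * g i) =
  \big[*%g/1]_(i <- r) w i * \big[*%g/1]_(i <- r) g i.
Proof.
move=> Hw; elim: r => [|a r IH]; first by rewrite !big_nil mulg1.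
have HW : in_center (\big[*%g/1]_(i <- r) w i).
  elim: r {IH} => [|b r IH']; first by rewrite big_nil => h; rewrite mul1g mulg1.
  by rewrite big_cons => h; rewrite -mulgA IH' !mulgA Hw.
rewrite !big_cons IH -!mulgA; congr (_ * _); rewrite !mulgA; congr (_ * _).
by rewrite HW.
Qed.

Lemma gcd_step (G : groupType) (z : G) a b :
  z ^+ a = 1 -> z ^+ b = 1 -> z ^+ gcdn a b = 1.
Proof.
move=> Ha Hb; case: (posnP a) => [->|a0]; first by rewrite gcd0n.
have [u _ /dvdnP [q Hq]] := Bezoutl b a0.
have : z ^+ (gcdn a b + u * b) = 1 by rewrite Hq mulnC expgnA Ha expg1n.
by rewrite expgnDr mulnC expgnA Hb expg1n mulg1.
Qed.

Theorem corollary3p10 (G : groupType) (c : G) (n : nat) (k : 'I_n -> int) :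
  two_large (fun x : 'I_n -> G => word_val k x = c) ->
  forall z : G, in_center z -> zexpg z (gcd_list k) = 1%g.
Proof.
move=> HL z Hz.
have Hk : forall j, zexpg z (k j) = 1.
  move=> j.
  pose w : 'I_n -> G := fun i => if i == j then z else 1.
  have [x [y [Hx [Hy E]]]] := HL w (fun _ => 1).
  have Ey : forall i, y i = w i * x i.
    by move=> i; have := congr1 (fun f => f i) E; rewrite /tmul /= mul1g.
  have Hwc : forall i, in_center (w i).
    by move=> i g; rewrite /w; case: (i == j); rewrite ?Hz // mul1g mulg1.
  move: Hy; rewrite /word_val.
  under eq_bigr => i _ do rewrite Ey zexpgM //.
  rewrite prod_split; last by move=> i; apply: center_zexpg.
  rewrite [X in _ * X]Hx.
  have -> : \big[*%g/1]_(i < n) zexpg (w i) (k i) = zexpg z (k j).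
    rewrite (_ : zexpg z (k j) = zexpg (w j) (k j)); last by rewrite /w eqxx.
    rewrite -(@big_pred1_eq G 1 *%g _ j (fun i => zexpg (w i) (k i))).
    rewrite big_mkcond; apply: eq_bigr => i _; rewrite /w.
    case: (i == j) => //; case: (k i) => m /=; by rewrite expg1n ?invg1.
  by move=> /(congr1 (fun t => t * c^-1)); rewrite -mulgA mulgV mulg1.
apply/zexpg_eq1; rewrite /gcd_list.
apply: (big_ind (fun m : int => z ^+ `|m|%N = 1)).
- by rewrite expg0.
- by move=> a b Ha Hb; rewrite /gcdz /= ; apply: gcd_step.
- by move=> i _; apply/zexpg_eq1.
Qed.
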